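(* Let $f\colon\mathbb{R}^d\to\mathbb{R}\cup\{\infty\}$ be a lower semicontinuous convex function, let $Q\subseteq\mathbb{R}^d$ be a nonempty closed convex set contained in the domain of $f$, and assume the set $X^*$ of minimizers of $f$ over $Q$ is nonempty, with minimum value $f^*$. Let $g(x;\xi)$ be a stochastic subgradient oracle, i.e. $\mathbb{E}_{\xi\sim D}\,g(x;\xi)\in\partial f(x)$ for all $x\in Q$, and suppose there are constants $L_0,L_1\ge 0$ with $$\mathbb{E}_{\xi}\|g(x;\xi)\|^2\le L_0^2+L_1(f(x)-f^* )\qquad\text{for all }x\in Q.$$ Fix $x^*\in X^*$, $x_0\in Q$, and consider the iteration $x_{k+1}=P_Q(x_k-\alpha_k g(x_k;\xi_k))$ with $\xi_k\sim D$ i.i.d. Then for any positive sequence $(\alpha_k)$ with $L_1\alpha_k<2$ for all $k$, and any $T\ge 0$, $$\mathbb{E}_{\xi_{0\dots T}}\left[f\left(\frac{\sum_{k=0}^T\alpha_k(2-L_1\alpha_k)x_k}{\sum_{k=0}^T\alpha_k(2-L_1\alpha_k)}\right)-f^*\right]\le\frac{\|x_0-x^*\|^2+L_0^2\sum_{k=0}^T\alpha_k^2}{\sum_{k=0}^T\alpha_k(2-L_1\alpha_k)}.$$ In particular, if $L_0>0$ and the constant step size $\alpha_k=\|x_0-x^*\|/(L_0\sqrt{T+1})$ satisfies $L_1\alpha_k<2$, then $$\mathbb{E}_{\xi_{0\dots T}}\left[f\left(\frac{1}{T+1}\sum_{k=0}^Tx_k\right)-f^*\right]\le\frac{L_0\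|x_0-x^*\|}{\sqrt{T+1}}\cdot\frac{2}{2-L_1\alpha_k}.$$
   Context: $P_Q$ denotes orthogonal projection onto $Q$; $\partial f(x)=\{g: f(y)\ge f(x)+g^T(y-x)\ \forall y\in\mathbb{R}^d\}$. $D$ is a distribution from which the samples $\xi_k$ are drawn independently; $\mathbb{E}_{\xi_{0\dots T}}$ denotes expectation over $\xi_0,\dots,\xi_T$. *)

(* Defs.v *)
From HB Require Import structures.
From mathcomp Require Import all_boot all_order all_algebra.
From mathcomp Require Import all_classical all_reals all_analysis.
Set Implicit Arguments. Unset Strict Implicit. Unset Printing Implicit Defensive.
Import Order.TTheory GRing.Theory Num.Theory numFieldNormedType.Exports.
Local Open Scope classical_set_scope.
Local Open Scope ring_scope.

(* R^d is represented by row vectors 'rV[R]_d; its topology is the library's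
   (product) topology on matrices, which is the Euclidean topology. *)

Section Euclid.
Variables (R : realType) (d : nat).

Definition dotv (u v : 'rV[R]_d) : R := \sum_(i < d) u 0 i * v 0 i.
Definition enorm (u : 'rV[R]_d) : R := Num.sqrt (dotv u u).

Definition convex_efun (f : 'rV[R]_d -> \bar R) : Prop :=
  forall (x y : 'rV[R]_d) (t : R), 0 < t < 1 ->
    (f (t *: x + (1 - t) *: y)%R <= t%:E * f x + (1 - t)%:E * f y)%E.

Definition is_proj (Q : set 'rV[R]_d) (x y : 'rV[R]_d) : Prop :=
  Q y /\ forall z, Q z -> enorm (x - y) <= enorm (x - z).

Definition subdiff (f : 'rV[R]_d -> \bar R) (x : 'rV[R]_d) : set 'rV[R]_d :=
  [set g | forall y, (f x + (dotv g (y - x))%:E <= f y)%E].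

Definition borelV := g_sigma_algebraType (@open 'rV[R]_d).

End Euclid.

Section Oracle.
Variables (R : realType) (d : nat) (dX : measure_display) (Xi : measurableType dX).
Variable D : probability Xi R.

Definition mean_oracle (g : 'rV[R]_d -> Xi -> 'rV[R]_d) (x : 'rV[R]_d) : 'rV[R]_d :=
  \row_(i < d) fine (\int[D]_xi (g x xi 0 i)%:E)%E.

(* Expectation over n i.i.d. samples xi_0, ..., xi_(n-1) ~ D of a function F of
   the sample list [:: xi_0; ...; xi_(n-1)], as the iterated integral
   \int D(dxi_0) \int D(dxi_1) ... F [:: xi_0; ...; xi_(n-1)]
   (the integral against the product measure D^(n)). *)
Fixpoint iid_expect (n : nat) (F : seq Xi -> \bar R) : \bar R :=
  match n with
  | 0 => F [::]
  | n'.+1 => (\int[D]_xi iid_expect n' (fun s => F (xi :: s)))%E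
  end.

(* projected stochastic subgradient method:
   x_(k+1) = P (x_k - alpha_k g(x_k; xi_k)); sgd_run k x s runs the method from
   x = x_k, consuming the samples s = [:: xi_k; xi_(k+1); ...]. *)
Fixpoint sgd_run (P : 'rV[R]_d -> 'rV[R]_d) (g : 'rV[R]_d -> Xi -> 'rV[R]_d)
  (alpha : nat -> R) (k : nat) (x : 'rV[R]_d) (s : seq Xi) : 'rV[R]_d :=
  match s with
  | [::] => x
  | xi :: s' => sgd_run P g alpha k.+1 (P (x - alpha k *: g x xi)) s'
  end.

Definition sgd_iter P g alpha (x0 : 'rV[R]_d) (k : nat) (s : seq Xi) : 'rV[R]_d :=
  sgd_run P g alpha 0 x0 (take k s).

End Oracle.

(* Main.v *)
Set Warnings "-all".
Require Import Defs.
From HB Require Import structures.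
From mathcomp Require Import all_boot all_order all_algebra.
From mathcomp Require Import all_classical all_reals all_analysis.
From mathcomp Require Import ring lra measurable_realfun.
Import Order.TTheory GRing.Theory Num.Theory numFieldNormedType.Exports.
Local Open Scope classical_set_scope.
Local Open Scope ring_scope.
Set Implicit Arguments. Unset Strict Implicit. Unset Printing Implicit Defensive.

Lemma dotvC (R : realType) d (u v : 'rV[R]_d) : dotv u v = dotv v u.
Proof. by rewrite /dotv; apply: eq_bigr => i _; rewrite mulrC. Qed.

Lemma dotvDl (R : realType) d (u v w : 'rV[R]_d) : dotv (u + v) w = dotv u w + dotv v w.
Proof. by rewrite /dotv -big_split; apply: eq_bigr => i _; rewrite !mxE mulrDl. Qed.

Lemma dotvZl (R : realType) d (a : R) (u w : 'rV[R]_d) : dotv (a *: u) w = a * dotv u w.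
Proof. by rewrite /dotv mulr_sumr; apply: eq_bigr => i _; rewrite !mxE mulrA. Qed.

Lemma dotvNl (R : realType) d (u w : 'rV[R]_d) : dotv (- u) w = - dotv u w.
Proof. by rewrite -scaleN1r dotvZl mulN1r. Qed.

Lemma dotvBl (R : realType) d (u v w : 'rV[R]_d) : dotv (u - v) w = dotv u w - dotv v w.
Proof. by rewrite dotvDl dotvNl. Qed.

Lemma dotvDr (R : realType) d (u v w : 'rV[R]_d) : dotv w (u + v) = dotv w u + dotv w v.
Proof. by rewrite dotvC dotvDl !(dotvC w). Qed.

Lemma dotvZr (R : realType) d (a : R) (u w : 'rV[R]_d) : dotv w (a *: u) = a * dotv w u.
Proof. by rewrite dotvC dotvZl dotvC. Qed.

Lemma dotvBr (R : realType) d (u v w : 'rV[R]_d) : dotv w (u - v) = dotv w u - dotv w v.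
Proof. by rewrite dotvC dotvBl !(dotvC w). Qed.

Lemma dotv_ge0 (R : realType) d (u : 'rV[R]_d) : 0 <= dotv u u.
Proof. by rewrite /dotv; apply: sumr_ge0 => i _; rewrite -expr2 sqr_ge0. Qed.

Lemma enorm_sq (R : realType) d (u : 'rV[R]_d) : enorm u ^+ 2 = dotv u u.
Proof. by rewrite /enorm sqr_sqrtr // dotv_ge0. Qed.

Lemma enorm_ge0 (R : realType) d (u : 'rV[R]_d) : 0 <= enorm u.
Proof. by rewrite /enorm sqrtr_ge0. Qed.

Lemma enorm_eq0 (R : realType) d (u : 'rV[R]_d) : enorm u = 0 -> u = 0.
Proof.
move=> h; have : dotv u u = 0 by rewrite -enorm_sq h expr0n.
rewrite /dotv => /eqP; rewrite psumr_eq0; last by move=> i _; rewrite -expr2 sqr_ge0.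
move=> /allP H; apply/rowP => i; rewrite mxE.
by have /(_ (mem_index_enum i))/implyP/(_ isT) := H i; rewrite mulf_eq0 orbb => /eqP.
Qed.

Lemma enorm_le (R : realType) d (u v : 'rV[R]_d) :
  enorm u <= enorm v -> dotv u u <= dotv v v.
Proof. by move=> h; rewrite -!enorm_sq lerXn2r// ?nnegrE ?enorm_ge0. Qed.

Lemma convQ (R : realType) d (Q : set 'rV[R]_d) (x y : 'rV[R]_d) (t : R) :
  convex_set Q -> Q x -> Q y -> 0 <= t <= 1 -> Q (t *: x + (1 - t) *: y).
Proof.
move=> cQ Qx Qy /andP[t0 t1].
have ht := itv01_subdef t0 t1.
pose tt : {i01 R} := Itv.mk ht.
have := cQ x y tt; rewrite !inE => /(_ Qx Qy).
done.
Qed.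

Lemma small_t (R : realType) (c B : R) : 0 <= B ->
  (forall t, 0 < t < 1 -> 2 * c <= t * B) -> c <= 0.
Proof.
move=> B0 H; rewrite leNgt; apply/negP => c0.
have cB : 0 < c + B by lra.
set t := c / (2 * (c + B)).
have t0 : 0 < t by rewrite /t divr_gt0 // mulr_gt0.
have t1 : t < 1 by rewrite /t ltr_pdivrMr ?mulr_gt0 //; lra.
have := H t; rewrite t0 t1 => /(_ isT).
have e : 2 * t * (c + B) = c by rewrite /t; field; lra.
have tc : 0 < t * c by rewrite mulr_gt0.
nra.
Qed.

Lemma dotv_expand (R : realType) d (a b : 'rV[R]_d) (s : R) :
  dotv (a + s *: b) (a + s *: b) = dotv a a + 2 * s * dotv a b + s ^+ 2 * dotv b b.
Proof.
rewrite dotvDl !dotvDr !dotvZl !dotvZr (dotvC b a); ring.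
Qed.

Lemma proj_nonexp (R : realType) d (Q : set 'rV[R]_d) (y p z : 'rV[R]_d) :
  convex_set Q -> is_proj Q y p -> Q z ->
  dotv (p - z) (p - z) <= dotv (y - z) (y - z).
Proof.
move=> cQ [Qp Hp] Qz.
have key : forall t, 0 < t < 1 -> 2 * dotv (y - p) (z - p) <= t * dotv (z - p) (z - p).
  move=> t /andP[t0 t1].
  have Qq : Q (t *: z + (1 - t) *: p) by apply: convQ => //; rewrite ltW // ltW.
  have := enorm_le (Hp _ Qq).
  have -> : y - (t *: z + (1 - t) *: p) = (y - p) + (- t) *: (z - p).
    by apply/rowP => i; rewrite !mxE; ring.
  rewrite dotv_expand => h.
  have : t * (2 * dotv (y - p) (z - p)) <= t * (t * dotv (z - p) (z - p)) by nra.
  by rewrite ler_pM2l.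
have ab := small_t (dotv_ge0 _) key.
have -> : y - z = (y - p) + (-1) *: (z - p) by apply/rowP => i; rewrite !mxE; ring.
have -> : p - z = 0 + (-1) *: (z - p) by apply/rowP => i; rewrite !mxE; ring.
rewrite !dotv_expand.
have -> : dotv (0 : 'rV[R]_d) 0 = 0 by rewrite /dotv big1 // => i _; rewrite mxE mul0r.
have -> : dotv (0 : 'rV[R]_d) (z - p) = 0 by rewrite /dotv big1 // => i _; rewrite mxE mul0r.
have := dotv_ge0 (y - p); lra.
Qed.

Lemma proj_fix (R : realType) d (Q : set 'rV[R]_d) (y p : 'rV[R]_d) :
  is_proj Q y p -> Q y -> p = y.
Proof.
move=> [_ H] Qy; have := H _ Qy; rewrite subrr.
have -> : enorm (0 : 'rV[R]_d) = 0.
  by rewrite /enorm /dotv big1 ?sqrtr0 // => i _; rewrite mxE mul0r.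
move=> h; have : enorm (y - p) = 0 by apply/le_anti; rewrite h enorm_ge0.
by move/enorm_eq0/eqP; rewrite subr_eq0 => /eqP.
Qed.

Lemma finQ (R : realType) d (f : 'rV[R]_d -> \bar R) (Q : set 'rV[R]_d) x :
  (forall x, f x != -oo%E) -> (forall x, Q x -> (f x < +oo)%E) -> Q x ->
  f x = (fine (f x))%:E.
Proof.
move=> h1 h2 Qx; rewrite fineK // fin_numE h1 /=.
by have := h2 _ Qx; rewrite lt_neqAle => /andP[].
Qed.

Lemma conv_fr (R : realType) d (f : 'rV[R]_d -> \bar R) (Q : set 'rV[R]_d) x y t :
  (forall x, f x != -oo%E) -> (forall x, Q x -> (f x < +oo)%E) ->
  convex_efun f -> convex_set Q -> Q x -> Q y -> 0 < t < 1 ->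
  fine (f (t *: x + (1 - t) *: y)) <= t * fine (f x) + (1 - t) * fine (f y).
Proof.
move=> h1 h2 cf cQ Qx Qy /andP[t0 t1].
have Qz : Q (t *: x + (1 - t) *: y) by apply: convQ => //; rewrite !ltW.
have := cf x y t; rewrite t0 t1 => /(_ isT).
by rewrite (finQ h1 h2 Qz) (finQ h1 h2 Qx) (finQ h1 h2 Qy) -!EFinM -EFinD lee_fin.
Qed.

Lemma jensen (R : realType) d (f : 'rV[R]_d -> \bar R) (Q : set 'rV[R]_d)
  (w : nat -> R) (x : nat -> 'rV[R]_d) n :
  (forall x, f x != -oo%E) -> (forall x, Q x -> (f x < +oo)%E) ->
  convex_efun f -> convex_set Q ->
  (forall k, 0 < w k) -> (forall k, Q (x k)) ->
  Q ((\sum_(k < n.+1) w k)^-1 *: \sum_(k < n.+1) w k *: x k) /\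
  fine (f ((\sum_(k < n.+1) w k)^-1 *: \sum_(k < n.+1) w k *: x k)) <=
    (\sum_(k < n.+1) w k)^-1 * \sum_(k < n.+1) w k * fine (f (x k)).
Proof.
move=> h1 h2 cf cQ w0 Qx; elim: n => [|n [IHQ IHf]].
  rewrite !big_ord1 scalerA mulVf ?scale1r ?mulrA ?mulVf ?mul1r //; last 2 first.
  - by rewrite gt_eqF.
  - by rewrite gt_eqF.
rewrite !(big_ord_recr n.+1) /=.
set S := \sum_(i < n.+1) w i; set A := \sum_(i < n.+1) w i *: x i.
set B := \sum_(i < n.+1) w i * fine (f (x i)).
have S0 : 0 < S.
  rewrite /S big_ord_recl; have := w0 0%N.
  have : 0 <= \sum_(i < n) w (bump 0 i) by apply: sumr_ge0 => i _; exact: ltW.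
  lra.
move: IHQ IHf; rewrite -/S -/A -/B => IHQ IHf.
have W0 : 0 < S + w n.+1 by rewrite addr_gt0.
set t := S / (S + w n.+1).
have t0 : 0 < t by rewrite divr_gt0.
have t1 : t < 1 by rewrite ltr_pdivrMr // mul1r ltrDl.
have -> : (S + w n.+1)^-1 *: (A + w n.+1 *: x n.+1) =
          t *: (S^-1 *: A) + (1 - t) *: x n.+1.
  rewrite scalerA scalerDr scalerA; congr (_ *: _ + _ *: _).
  - by rewrite /t; field; apply/andP; split; rewrite gt_eqF.
  - by rewrite /t; field; rewrite gt_eqF.
split; first by apply: convQ => //; rewrite !ltW.
have ht : 0 < t < 1 by rewrite t0 t1.
apply: (le_trans (conv_fr h1 h2 cf cQ IHQ (Qx n.+1) ht)).
have -> : (S + w n.+1)^-1 * (B + w n.+1 * fine (f (x n.+1))) =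
          t * (S^-1 * B) + (1 - t) * fine (f (x n.+1)).
  by rewrite /t; field; apply/andP; split; rewrite gt_eqF.
by rewrite lerD2r ler_pM2l.
Qed.

Local Open Scope ereal_scope.

Lemma le_int_nm dd (T : measurableType dd) (R : realType) (mu : {measure set T -> \bar R})
  (f1 f2 : T -> \bar R) :
  (forall x, 0 <= f1 x) -> (forall x, f1 x <= f2 x) ->
  \int[mu]_x f1 x <= \int[mu]_x f2 x.
Proof.
move=> h0 h12; rewrite !ge0_integralTE //; last by move=> x; exact: le_trans (h0 x) (h12 x).
apply: le_ereal_sup => _ [h hf <-]; exists h => // x; exact: le_trans (hf x) (h12 x).
Qed.

Lemma iid_ge0 (R : realType) dX (Xi : measurableType dX) (D : probability Xi R) n
  (F : seq Xi -> \bar R) :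
  (forall s, size s = n -> 0 <= F s) -> 0 <= iid_expect D n F.
Proof.
elim: n F => [|n IH] F h /=; first exact: h.
apply: integral_ge0 => xi _; apply: IH => s hs; apply: h; by rewrite /= hs.
Qed.

Lemma iid_le (R : realType) dX (Xi : measurableType dX) (D : probability Xi R) n
  (F G : seq Xi -> \bar R) :
  (forall s, size s = n -> 0 <= F s) -> (forall s, size s = n -> F s <= G s) ->
  iid_expect D n F <= iid_expect D n G.
Proof.
elim: n F G => [|n IH] F G h0 h /=; first exact: h.
apply: le_int_nm => [xi|xi].
  by apply: iid_ge0 => s hs; apply: h0; rewrite /= hs.
by apply: IH => s hs; [apply: h0 | apply: h]; rewrite /= hs.
Qed.

Lemma int_G (R : realType) d dX (Xi : measurableType dX) (D : probability Xi R)
  (G : Xi -> 'rV[R]_d) (M : R) :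
  (forall i, measurable_fun setT (fun xi => G xi 0%R i)) ->
  \int[D]_xi ((enorm (G xi)) ^+ 2)%:E <= M%:E ->
  D.-integrable setT (fun xi => (dotv (G xi) (G xi))%:E) /\
  (forall i, D.-integrable setT (fun xi => (G xi 0%R i)%:E)).
Proof.
move=> mG hM.
have mG2 : measurable_fun setT (fun xi => dotv (G xi) (G xi)).
  rewrite /dotv; apply: measurable_sum => i; exact: measurable_funM.
have iG2 : D.-integrable setT (fun xi => (dotv (G xi) (G xi))%:E).
  apply/integrableP; split; first exact/measurable_EFinP.
  rewrite (eq_integral (fun xi => ((enorm (G xi)) ^+ 2)%:E)); last first.
    by move=> xi _; rewrite gee0_abs ?lee_fin ?dotv_ge0 // enorm_sq.
  exact: le_lt_trans hM (ltry _).
split => // i.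
apply: (le_integrable measurableT (g := (EFin \o cst 1%R) \+ (fun xi => (dotv (G xi) (G xi))%:E))).
- exact/measurable_EFinP.
- move=> xi _ /=; rewrite lee_fin.
  rewrite (ger0_norm (x := (1 + _)%R)); last by rewrite addr_ge0 ?dotv_ge0.
  have h1 : (G xi 0%R i ^+ 2 <= dotv (G xi) (G xi))%R.
    rewrite /dotv (bigD1 i) //= expr2 lerDl; apply: sumr_ge0 => j _.
    by rewrite -expr2 sqr_ge0.
  have h2 : (`|G xi 0%R i| <= 1 + G xi 0%R i ^+ 2)%R.
    rewrite -real_normK ?num_real //.
    have := sqr_ge0 (`|G xi 0%R i| - 1)%R; nra.
  by apply: (le_trans h2); rewrite lerD2l.
- apply: integrableD => //; exact: finite_measure_integrable_cst.
Qed.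

Lemma int_dot (R : realType) d dX (Xi : measurableType dX) (D : probability Xi R)
  (G : Xi -> 'rV[R]_d) (v : 'rV[R]_d) :
  (forall i, D.-integrable setT (fun xi => (G xi 0%R i)%:E)) ->
  D.-integrable setT (fun xi => (dotv v (G xi))%:E) /\
  \int[D]_xi (dotv v (G xi))%:E =
    (dotv v (\row_(i < d) fine (\int[D]_xi (G xi 0%R i)%:E)))%:E.
Proof.
move=> iG.
have e : (fun xi => (dotv v (G xi))%:E) =
         (fun xi => \sum_(i < d) (v 0%R i)%:E * (G xi 0%R i)%:E).
  apply/funext => xi; rewrite /dotv -sumEFin; apply: eq_bigr => i _; by rewrite EFinM.
have ii : forall i : 'I_d, D.-integrable setT (fun xi => (v 0%R i)%:E * (G xi 0%R i)%:E).
  move=> i; exact: integrableZl.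
split.
  rewrite e; exact: integrable_sum.
rewrite e integral_sum // /dotv -sumEFin; apply: eq_bigr => i _.
rewrite integralZl // mxE EFinM fineK //; exact: integrable_fin_num.
Qed.

Lemma step (R : realType) d dX (Xi : measurableType dX) (D : probability Xi R)
  (G : Xi -> 'rV[R]_d) (v : 'rV[R]_d) (M K c a : R) :
  (forall i, measurable_fun setT (fun xi => G xi 0%R i)) ->
  \int[D]_xi ((enorm (G xi)) ^+ 2)%:E <= M%:E ->
  (0 <= c)%R ->
  \int[D]_xi (K + c * dotv (v + (- a) *: G xi) (v + (- a) *: G xi))%:E <=
  (K + c * (dotv v v - 2 * a * dotv v (\row_(i < d) fine (\int[D]_xi (G xi 0%R i)%:E))
            + a ^+ 2 * M))%:E.
Proof.
move=> mG hM c0.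
have [iG2 iG] := int_G mG hM.
have [iGv Gv] := int_dot v iG.
rewrite (eq_integral (fun xi => ((K + c * dotv v v)%:E + (c * (2 * - a))%:E * (dotv v (G xi))%:E)
   + (c * a ^+ 2)%:E * (dotv (G xi) (G xi))%:E)); last first.
  by move=> xi _; rewrite dotv_expand -!EFinM -!EFinD; congr EFin; ring.
have ic : D.-integrable setT (fun _ : Xi => (K + c * dotv v v)%:E).
  exact: finite_measure_integrable_cst.
rewrite integralD //; last 2 first.
  - by apply: integrableD => //; exact: integrableZl.
  - exact: integrableZl.
rewrite integralD //; last exact: integrableZl.
rewrite integral_cst //.
rewrite [X in (_ * X)%E](_ : _ = 1%E); last exact: probability_setT.
rewrite mule1 !integralZl // Gv.
have fI := integrable_fin_num measurableT iG2.
rewrite -(fineK fI) -!EFinM -!EFinD lee_fin.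
have hI : (fine (\int[D]_xi (dotv (G xi) (G xi))%:E) <= M)%R.
  rewrite -lee_fin fineK //; apply: le_trans hM.
  by rewrite le_eqVlt; apply/orP; left; apply/eqP; apply: eq_integral => xi _; rewrite enorm_sq.
have : (0 <= c * a ^+ 2)%R by rewrite mulr_ge0 // sqr_ge0.
nra.
Qed.

Section Main.
Variables (R : realType) (d : nat) (dX : measure_display) (Xi : measurableType dX).
Variable (D : probability Xi R).
Variables (f : 'rV[R]_d -> \bar R) (Q : set 'rV[R]_d) (P : 'rV[R]_d -> 'rV[R]_d)
  (g : 'rV[R]_d -> Xi -> 'rV[R]_d) (L0 L1 fstar : R) (xstar : 'rV[R]_d) (alpha : nat -> R).
Hypothesis hf1 : forall x, f x != -oo.
Hypothesis hfQ : forall x, Q x -> f x < +oo.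
Hypothesis cQ : convex_set Q.
Hypothesis hP : forall y, is_proj Q y (P y).
Hypothesis Qxs : Q xstar.
Hypothesis fxs : f xstar = fstar%:E.
Hypothesis hmin : forall x, Q x -> (fstar <= fine (f x))%R.
Hypothesis mg : forall x i, measurable_fun setT (fun xi => g x xi 0%R i).
Hypothesis hsub : forall x, Q x -> subdiff f x (mean_oracle D g x).
Hypothesis hmom : forall x, Q x ->
  \int[D]_xi ((enorm (g x xi)) ^+ 2)%:E <= (L0 ^+ 2 + L1 * (fine (f x) - fstar))%:E.
Hypothesis ha0 : forall k, (0 <= alpha k)%R.
Hypothesis hw0 : forall k, (0 <= alpha k * (2 - L1 * alpha k))%R.

Local Open Scope ring_scope.

Fixpoint Hf (k : nat) (x : 'rV[R]_d) (s : seq Xi) : R :=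
  match s with
  | [::] => dotv (x - xstar) (x - xstar)
  | xi :: s' => alpha k * (2 - L1 * alpha k) * (fine (f x) - fstar)
                + Hf k.+1 (P (x - alpha k *: g x xi)) s'
  end.

Lemma run_Q k x s : Q x -> Q (sgd_run P g alpha k x s).
Proof.
elim: s k x => [|xi s IH] k x Qx //=; apply: IH; by case: (hP (x - alpha k *: g x xi)).
Qed.

Lemma Hf_ge0 k x s : Q x -> 0 <= Hf k x s.
Proof.
elim: s k x => [|xi s IH] k x Qx /=; first exact: dotv_ge0.
apply: addr_ge0; last by apply: IH; case: (hP (x - alpha k *: g x xi)).
by apply: mulr_ge0 => //; rewrite subr_ge0 hmin.
Qed.

Lemma Hf_sum k x s :
  \sum_(j < size s) alpha (k + j)%N * (2 - L1 * alpha (k + j)%N) *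
       (fine (f (sgd_run P g alpha k x (take j s))) - fstar)
  + dotv (sgd_run P g alpha k x s - xstar) (sgd_run P g alpha k x s - xstar) = Hf k x s.
Proof.
elim: s k x => [|xi s IH] k x /=; first by rewrite big_ord0 add0r.
rewrite big_ord_recl /= addn0 -addrA; congr (_ + _).
rewrite -IH; congr (_ + _); apply: eq_bigr => j _.
by rewrite /bump /= add1n addnS addSn.
Qed.

Lemma subg x : Q x ->
  fine (f x) - fstar <= dotv (x - xstar) (mean_oracle D g x).
Proof.
move=> Qx; have := hsub Qx xstar.
rewrite (finQ hf1 hfQ Qx) fxs -EFinD lee_fin.
have -> : xstar - x = - (x - xstar) by rewrite opprB.
rewrite dotvC dotvNl; lra.
Qed.

Lemma main n : forall k x b c, Q x -> 0 <= b -> 0 <= c ->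
  (iid_expect D n (fun s => (b + c * Hf k x s)%:E) <=
  (b + c * (dotv (x - xstar) (x - xstar) + L0 ^+ 2 * \sum_(j < n) alpha (k + j)%N ^+ 2))%:E)%E.
Proof.
elim: n => [|n IH] k x b c Qx b0 c0 /=.
  by rewrite big_ord0 mulr0 addr0.
set w := alpha k * (2 - L1 * alpha k).
set del := fine (f x) - fstar.
have del0 : 0 <= del by rewrite subr_ge0 hmin.
set S' := \sum_(j < n) alpha (k.+1 + j)%N ^+ 2.
have S'0 : 0 <= S' by apply: sumr_ge0 => j _; exact: sqr_ge0.
have w0 : 0 <= w := hw0 k.
have b'0 : 0 <= b + c * (w * del) by rewrite addr_ge0 // mulr_ge0 // mulr_ge0.
have Qx' : forall xi, Q (P (x - alpha k *: g x xi)) by move=> xi; case: (hP (x - alpha k *: g x xi)).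
apply: (@le_trans _ _ (\int[D]_xi ((b + c * (w * del)) + c * (dotv (P (x - alpha k *: g x xi) - xstar)
        (P (x - alpha k *: g x xi) - xstar) + L0 ^+ 2 * S'))%:E)%E).
  apply: le_int_nm => xi.
    by apply: iid_ge0 => s _; rewrite lee_fin; apply: addr_ge0 => //; apply: mulr_ge0 => //; apply: addr_ge0; [exact: mulr_ge0 | exact: Hf_ge0].
  have -> : (fun s => (b + c * (w * del + Hf k.+1 (P (x - alpha k *: g x xi)) s))%:E) =
            (fun s => ((b + c * (w * del)) + c * Hf k.+1 (P (x - alpha k *: g x xi)) s)%:E).
    by apply/funext => s /=; congr EFin; rewrite /w /del; ring.
  exact: IH.
apply: (@le_trans _ _ (\int[D]_xi (((b + c * (w * del)) + c * (L0 ^+ 2 * S')) +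
        c * dotv ((x - xstar) + (- alpha k) *: g x xi) ((x - xstar) + (- alpha k) *: g x xi))%:E)%E).
  apply: le_int_nm => xi.
    by rewrite lee_fin addr_ge0 // mulr_ge0 // addr_ge0 ?dotv_ge0 // mulr_ge0 // sqr_ge0.
  rewrite lee_fin.
  have := proj_nonexp cQ (hP (x - alpha k *: g x xi)) Qxs.
  have -> : x - alpha k *: g x xi - xstar = (x - xstar) + (- alpha k) *: g x xi.
    by apply/rowP => i; rewrite !mxE; ring.
  move=> h; have : c * dotv (P (x - alpha k *: g x xi) - xstar) (P (x - alpha k *: g x xi) - xstar)
     <= c * dotv (x - xstar + - alpha k *: g x xi) (x - xstar + - alpha k *: g x xi)
    by rewrite ler_wpM2l.
  lra.
have := @step _ _ _ _ D (g x) (x - xstar) _ (b + c * (w * del) + c * (L0 ^+ 2 * S')) c (alpha k) (mg x) (hmom Qx) c0.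
move=> /le_trans; apply.
rewrite lee_fin big_ord_recl /= addn0.
have -> : \sum_(i < n) alpha (k + bump 0 i)%N ^+ 2 = S'.
  by apply: eq_bigr => j _; rewrite /bump /= add1n addnS addSn.
have hs := subg Qx.
move: hs; rewrite /mean_oracle -/del => hs.
set vv := dotv (x - xstar) (x - xstar).
move: hs; set m := dotv (x - xstar) _ => hs.
have : 0 <= c * alpha k * (m - del) by rewrite mulr_ge0 ?mulr_ge0 // subr_ge0.
rewrite /w; nra.
Qed.

End Main.

Lemma iid0 (R : realType) dX (Xi : measurableType dX) (D : probability Xi R) n :
  iid_expect D n (fun _ => 0) = 0.
Proof.
elim: n => [|n IH] //=.
by rewrite (eq_integral (cst 0)) ?integral0 // => xi _; exact: IH.
Qed.

Lemma run0 (R : realType) d dX (Xi : measurableType dX) (Q : set 'rV[R]_d) P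
  (g : 'rV[R]_d -> Xi -> 'rV[R]_d) k x s :
  (forall y, is_proj Q y (P y)) -> Q x -> sgd_run P g (fun _ => 0%R) k x s = x.
Proof.
move=> hP Qx; elim: s k => [|xi s IH] k //=.
by rewrite scale0r subr0 (proj_fix (hP x) Qx) IH.
Qed.

Local Close Scope ereal_scope.
Theorem theorem1p6 (R : realType) (d : nat) (dX : measure_display)
  (Xi : measurableType dX) (D : probability Xi R)
  (f : 'rV[R]_d -> \bar R) (Q : set 'rV[R]_d) (P : 'rV[R]_d -> 'rV[R]_d)
  (g : 'rV[R]_d -> Xi -> 'rV[R]_d) (L0 L1 fstar : R) (xstar x0 : 'rV[R]_d) :
  (* f : R^d -> R \cup {+oo}, lower semicontinuous and convex *)
  (forall x, f x != -oo%E) ->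
  lower_semicontinuous f ->
  convex_efun f ->
  (* Q nonempty, closed, convex, contained in dom f *)
  Q !=set0 -> closed Q -> convex_set Q -> (* library convex_set (convex.v) *)
  (forall x, Q x -> (f x < +oo)%E) ->
  (* xstar \in X^*, f^* the minimum value of f over Q *)
  Q xstar -> (forall x, Q x -> (f xstar <= f x)%E) -> f xstar = fstar%:E ->
  (* P is the orthogonal projection onto Q *)
  (forall x, is_proj Q x (P x)) ->
  (* the oracle is (jointly) measurable *)
  (forall i, measurable_fun [set: (borelV R d * Xi)%type]
                (fun p : (borelV R d * Xi)%type => g p.1 p.2 0 i)) ->
  (* unbiasedness: E g(x; xi) \in \partial f(x) on Q *)
  (forall x, Q x -> subdiff f x (mean_oracle D g x)) ->
  (* second moment bound *)
  0 <= L0 -> 0 <= L1 ->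
  (forall x, Q x ->
     (\int[D]_xi ((enorm (g x xi)) ^+ 2)%:E <= (L0 ^+ 2 + L1 * (fine (f x) - fstar))%:E)%E) ->
  Q x0 ->
  (forall alpha : nat -> R, (forall k, 0 < alpha k) -> (forall k, L1 * alpha k < 2) ->
   forall T : nat,
     let w := fun k : nat => alpha k * (2 - L1 * alpha k) in
     (iid_expect D T.+1
        (fun s => f ((\sum_(k < T.+1) w k)^-1 *:
                       \sum_(k < T.+1) (w k *: sgd_iter P g alpha x0 k s)) - fstar%:E)
      <= (((enorm (x0 - xstar)) ^+ 2 + L0 ^+ 2 * \sum_(k < T.+1) alpha k ^+ 2)
            / \sum_(k < T.+1) w k)%:E)%E)
  /\
  (0 < L0 -> forall T : nat,
     let a := enorm (x0 - xstar) / (L0 * Num.sqrt (T.+1)%:R) in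
     L1 * a < 2 ->
     (iid_expect D T.+1
        (fun s => f ((T.+1)%:R^-1 *: \sum_(k < T.+1) sgd_iter P g (fun _ => a) x0 k s)
                  - fstar%:E)
      <= (L0 * enorm (x0 - xstar) / Num.sqrt (T.+1)%:R * (2 / (2 - L1 * a)))%:E)%E).
Proof.
move=> hf1 lsc cf Qne clQ cQ hfQ Qxs hxmin fxs hP mgj hsub L00 L10 hmom Qx0.
have hmin : forall x, Q x -> fstar <= fine (f x).
  by move=> x Qx; rewrite -lee_fin -fxs -(finQ hf1 hfQ Qx); exact: hxmin.
have mg : forall x i, measurable_fun setT (fun xi => g x xi 0 i).
  move=> x i; exact: (@measurable_fun_pair2 _ _ _ _ _ _ _ (x : borelV R d) (mgj i)).
match goal with |- ?A /\ _ => have P1 : A end.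
  move=> alpha ha hL T; cbv zeta.
  set w := fun k : nat => alpha k * (2 - L1 * alpha k).
  have wpos : forall k, 0 < w k by move=> k; rewrite /w mulr_gt0 // subr_gt0.
  have ha0 : forall k, 0 <= alpha k by move=> k; exact: ltW.
  have hw0 : forall k, 0 <= alpha k * (2 - L1 * alpha k) by move=> k; exact: ltW (wpos k).
  set W := \sum_(k < T.+1) w k.
  have W0 : 0 < W.
    rewrite /W big_ord_recl; have := wpos 0%N.
    have : 0 <= \sum_(i < T) w (bump 0 i) by apply: sumr_ge0 => i _; exact: ltW.
    lra.
  pose HH := Hf f P g L1 fstar xstar alpha.
  apply: (@le_trans _ _ (iid_expect D T.+1 (fun s => (0 + W^-1 * HH 0%N x0 s)%:E))).
    apply: iid_le => s hs.
    - have [J1 J2] := jensen (Q := Q) (f := f) (w := w)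
         (x := fun k => sgd_iter P g alpha x0 k s) T hf1 hfQ cf cQ wpos
         (fun k => run_Q g alpha hP 0 _ Qx0).
      cbv beta in J1, J2.
      by rewrite (finQ hf1 hfQ J1) -EFinB lee_fin subr_ge0; exact: hmin.
    - have [J1 J2] := jensen (Q := Q) (f := f) (w := w)
         (x := fun k => sgd_iter P g alpha x0 k s) T hf1 hfQ cf cQ wpos
         (fun k => run_Q g alpha hP 0 _ Qx0).
      cbv beta in J1, J2.
      rewrite (finQ hf1 hfQ J1) -EFinB lee_fin add0r.
      have hsum := Hf_sum f P g L1 fstar xstar alpha 0 x0 s.
      rewrite hs in hsum.
      have E1 : \sum_(j < T.+1) w j * fine (f (sgd_iter P g alpha x0 j s)) - W * fstar =
        \sum_(j < T.+1) alpha (0 + j)%N * (2 - L1 * alpha (0 + j)%N) *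
            (fine (f (sgd_run P g alpha 0 x0 (take j s))) - fstar).
        by rewrite /W mulr_suml -sumrB; apply: eq_bigr => j _; rewrite add0n /w /sgd_iter; ring.
      have dge := dotv_ge0 (sgd_run P g alpha 0 x0 s - xstar).
      have B : W^-1 * (\sum_(j < T.+1) w j * fine (f (sgd_iter P g alpha x0 j s)) - W * fstar)
               <= W^-1 * HH 0%N x0 s.
        apply: ler_wpM2l; first by rewrite invr_ge0 ltW.
        by rewrite E1 /HH -hsum lerDl.
      have C : W^-1 * (\sum_(j < T.+1) w j * fine (f (sgd_iter P g alpha x0 j s)) - W * fstar)
               = W^-1 * (\sum_(j < T.+1) w j * fine (f (sgd_iter P g alpha x0 j s))) - fstar.
        by field; rewrite gt_eqF.
      rewrite -/W in J2.
      lra.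
  have Wi : 0 <= W^-1 by rewrite invr_ge0 ltW.
  apply: le_trans (main hf1 hfQ cQ hP Qxs fxs hmin mg hsub hmom ha0 hw0 T.+1 0 Qx0 (lexx 0) Wi) _.
  rewrite lee_fin enorm_sq add0r.
  under eq_bigr do rewrite add0n.
  by rewrite mulrC.
split; first exact: P1.
move=> L0pos T; cbv zeta.
set q := Num.sqrt (T.+1)%:R.
set r := enorm (x0 - xstar).
set a := r / (L0 * q) => ha2.
have q0 : 0 < q by rewrite sqrtr_gt0 ltr0n.
have r0 : 0 <= r := enorm_ge0 _.
have [rz|rpos] := eqVneq r 0.
  have xe : x0 = xstar by apply/eqP; rewrite -subr_eq0; apply/eqP; exact: enorm_eq0.
  have a0 : a = 0 by rewrite /a rz mul0r.
  rewrite rz mulr0 mul0r mul0r.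
  apply: (@le_trans _ _ 0%E); last by [].
  rewrite le_eqVlt; apply/orP; left; apply/eqP.
  rewrite -(iid0 D T.+1); congr iid_expect; apply/funext => s; rewrite a0.
  under eq_bigr do rewrite /sgd_iter (run0 _ _ _ hP Qx0).
  rewrite sumr_const card_ord -[x0 *+ _]scaler_nat scalerA mulVf ?scale1r; last by rewrite pnatr_eq0.
  by rewrite xe fxs subee.
have rp : 0 < r by rewrite lt_neqAle eq_sym rpos r0.
have apos : 0 < a by rewrite /a divr_gt0 // mulr_gt0.
have H := P1 (fun _ => a) (fun _ => apos) (fun _ => ha2) T.
cbv zeta in H.
have e : forall s, (\sum_(k < T.+1) a * (2 - L1 * a))^-1 *:
     \sum_(k < T.+1) (a * (2 - L1 * a)) *: sgd_iter P g (fun _ => a) x0 k s =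
     (T.+1)%:R^-1 *: \sum_(k < T.+1) sgd_iter P g (fun _ => a) x0 k s.
  move=> s; rewrite sumr_const card_ord -scaler_sumr scalerA; congr (_ *: _).
  have c0 : a * (2 - L1 * a) != 0 by rewrite gt_eqF // mulr_gt0 // subr_gt0.
  by rewrite -[(_ * _) *+ _]mulr_natr invfM mulrAC mulVf // mul1r.
rewrite (_ : (fun s => _) = (fun s => f ((\sum_(k < T.+1) a * (2 - L1 * a))^-1 *:
     \sum_(k < T.+1) (a * (2 - L1 * a)) *: sgd_iter P g (fun _ => a) x0 k s) - fstar%:E)%E);
  last by apply/funext => s; rewrite e.
apply: le_trans H _; rewrite lee_fin.
rewrite !sumr_const !card_ord -[_ ^+ 2 *+ _]mulr_natr -[(_ * _) *+ _]mulr_natr.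
have hq : q ^+ 2 = (T.+1)%:R by rewrite sqr_sqrtr // ler0n.
have hr : r = a * L0 * q by rewrite /a; field; rewrite gt_eqF // ?mulr_gt0 // gt_eqF.
rewrite -/r -hq hr le_eqVlt; apply/orP; left; apply/eqP.
have L0n : L0 != 0 by rewrite gt_eqF.
have qn : q != 0 by rewrite gt_eqF.
have an : a != 0 by rewrite gt_eqF.
have bn : 2 - L1 * a != 0 by rewrite gt_eqF // subr_gt0.
move: L0n qn an bn; clearbody a q; move=> L0n qn an bn.
field.
by rewrite qn an bn.
Qed.
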